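(* Fix $\theta$ with $\phi(\theta)<\beta$. If $\tau_1^d(\theta)<\tau_2^d(\theta)$ then $\tau^\star(\theta)\in(\tau_1^d(\theta),\tau_2^d(\theta))$; if $\tau_2^d(\theta)<\tau_1^d(\theta)$ then $\tau^\star(\theta)\in(\tau_2^d(\theta),\tau_1^d(\theta))$.
   Context: Setup. Let $Q\in\{0,1\}$ be a random variable with $\mathbb P(Q=1)=\pi\in(0,1)$, and let $(\Theta,\Gamma)$ be a real-valued random vector whose conditional joint density given $Q=1$ is $h_q$ and given $Q=0$ is $h_u$, both strictly positive on $\mathbb R^2$. Monotone likelihood ratio assumption: $l(\theta,\gamma)=h_q(\theta,\gamma)/h_u(\theta,\gamma)$ is continuous and strictly increasing in each of $\theta$ and $\gamma$, and for each $\theta$ the map $\gamma\mapsto l(\theta,\gamma)$ has infimum $0$ and supremum $+\infty$. Fix payoffs $x_q>0$, $x_u>0$. For $\tau\in(-x_u,x_q)$ let $A(\tau)=\mathbb 1\{l(\Theta,\Gamma)>\frac{(1-\pi)(x_u+\tau)}{\pi(x_q-\tau)}\}$, $s_1(\theta,\tau)=\mathbb E[Q\mid\Theta=\theta,A(\tau)=1]$, $s_2(\theta,\tau)=\mathbb E[A(\tau)\mid\Theta=\theta]$, $\phi(\theta)=\mathbb P(Q=1\mid\Theta=\theta)$. The equalizing prejudice $\tau^\star(\theta)$ is the unique $\tau\in(-x_u,x_q)$ with $s_1(\theta,\tau)=s_2(\theta,\tau)$. Fix a cutoff $c\in(-x_u,x_q)$ and let $\beta=(x_u+c)/(x_q+x_u)\in(0,1)$.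 The critical prejudice $\tau_k^d(\theta)$, $k=1,2$, is the unique $\tau\in(-x_u,x_q)$ with $s_k(\theta,\tau)=\beta$ (it exists for $k=1$ when $\phi(\theta)<\beta$, and always for $k=2$). *)

(* Defs.v *)
From HB Require Import structures.
From mathcomp Require Import all_boot all_order all_algebra.
From mathcomp Require Import all_classical all_reals all_analysis.
Set Implicit Arguments. Unset Strict Implicit. Unset Printing Implicit Defensive.
Import Order.TTheory GRing.Theory Num.Theory numFieldNormedType.Exports.
Local Open Scope classical_set_scope.
Local Open Scope ring_scope.

Section Model.
Variable R : realType.
(* pi = P(Q=1); hq, hu : conditional joint densities of (Theta,Gamma) given Q=1, Q=0 *)
Variables (pi xq xu : R) (hq hu : R * R -> R).

Definition lr (th g : R) : R := hq (th, g) / hu (th, g).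

Definition thr (tau : R) : R := ((1 - pi) * (xu + tau)) / (pi * (xq - tau)).

(* the event {A(tau) = 1} on the theta-section: set of gamma *)
Definition Aset (th tau : R) : set R := [set g | thr tau < lr th g].

Definition smass (h : R * R -> R) (th : R) (D : set R) : R :=
  Rintegral lebesgue_measure D (fun g => h (th, g)).

(* P(Theta in d theta, Gamma in D) / d theta  (joint density of Theta and event) *)
Definition jmass (th : R) (D : set R) : R :=
  pi * smass hq th D + (1 - pi) * smass hu th D.

(* phi(theta) = P(Q = 1 | Theta = theta) *)
Definition phi (th : R) : R := pi * smass hq th setT / jmass th setT.

(* s1(theta,tau) = E[Q | Theta = theta, A(tau) = 1] *)
Definition s1 (th tau : R) : R := pi * smass hq th (Aset th tau) / jmass th (Aset th tau).

(* s2(theta,tau) = E[A(tau) | Theta = theta] *)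
Definition s2 (th tau : R) : R := jmass th (Aset th tau) / jmass th setT.
End Model.

Definition model_assumptions (R : realType) (pi xq xu : R) (hq hu : R * R -> R) : Prop :=
  [/\ 0 < pi < 1, 0 < xq & 0 < xu] /\
  [/\ measurable_fun setT hq /\ measurable_fun setT hu,
      (forall z, 0 < hq z) /\ (forall z, 0 < hu z),
      (\int[(lebesgue_measure \x lebesgue_measure)%E]_z (hq z)%:E = 1%:E)%E /\
      (\int[(lebesgue_measure \x lebesgue_measure)%E]_z (hu z)%:E = 1%:E)%E &
      (* every theta-section is integrable (conditional densities well defined) *)
      (forall th, lebesgue_measure.-integrable setT (fun g => (hq (th, g))%:E)) /\
      (forall th, lebesgue_measure.-integrable setT (fun g => (hu (th, g))%:E))] /\
      [/\ continuous (fun z : R * R => lr hq hu z.1 z.2),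
          (forall g, {homo (fun th => lr hq hu th g) : a b / a < b}),
          (forall th, {homo (fun g => lr hq hu th g) : a b / a < b}),
          (forall th (e : R), 0 < e -> exists g, lr hq hu th g < e) &
          (forall th (M : R), exists g, M < lr hq hu th g)].

(* Main.v *)
Require Import Defs.
From HB Require Import structures.
From mathcomp Require Import all_boot all_order all_algebra.
From mathcomp Require Import all_classical all_reals all_analysis.
From mathcomp Require Import measurable_realfun.
From mathcomp Require Import ring lra.
Import Order.TTheory GRing.Theory Num.Theory numFieldNormedType.Exports.
Local Open Scope classical_set_scope.
Local Open Scope ring_scope.

Lemma lr_cont (R : realType) (hq hu : R * R -> R) th :
  continuous (fun z : R * R => lr hq hu z.1 z.2) ->
  continuous (fun g => lr hq hu th g).
Proof.
move=> cz g.
have hp : {for g, continuous (fun x : R => (th, x))}.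
  exact: (cvg_pair (cvg_cst th) cvg_id).
exact: (continuous_comp hp (cz (th, g))).
Qed.

Lemma Aset_meas (R : realType) (pi xq xu : R) (hq hu : R * R -> R) th t :
  continuous (fun z : R * R => lr hq hu z.1 z.2) ->
  measurable (Aset pi xq xu hq hu th t).
Proof.
move=> cz.
have mf := continuous_measurable_fun (@lr_cont R hq hu th cz).
have := mf measurableT _ (@measurable_itv _ `]thr pi xq xu t, +oo[).
rewrite setTI.
suff -> : Aset pi xq xu hq hu th t = (fun g => lr hq hu th g) @^-1` `]thr pi xq xu t, +oo[ by [].
by apply/seteqP; split => x /=; rewrite in_itv /= andbT.
Qed.

Lemma thr_pos (R : realType) (pi xq xu t : R) :
  0 < pi < 1 -> - xu < t < xq -> 0 < thr pi xq xu t.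
Proof.
move=> /andP[p0 p1] /andP[t1 t2]; rewrite /thr.
by apply: divr_gt0; apply: mulr_gt0; lra.
Qed.

Lemma thr_mono (R : realType) (pi xq xu t1 t2 : R) :
  0 < pi < 1 -> - xu < t1 -> t1 < t2 -> t2 < xq ->
  thr pi xq xu t1 < thr pi xq xu t2.
Proof.
move=> /andP[p0 p1] a b c; rewrite /thr.
have h1 : 0 < pi * (xq - t1) by apply: mulr_gt0; lra.
have h2 : 0 < pi * (xq - t2) by apply: mulr_gt0; lra.
rewrite ltr_pdivlMr // mulrAC ltr_pdivrMr //.
have e : 0 < 1 - pi by lra.
rewrite -subr_gt0.
have -> : (1 - pi) * (xu + t2) * (pi * (xq - t1)) - (1 - pi) * (xu + t1) * (pi * (xq - t2))
  = ((1 - pi) * pi) * ((t2 - t1) * (xq + xu)) by ring.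
by apply: mulr_gt0; apply: mulr_gt0; lra.
Qed.

Lemma meas_pos (R : realType) (D : set R) a b :
  measurable D -> a < b -> `]a, b] `<=` D -> (0 < lebesgue_measure D)%E.
Proof.
move=> mD ab sub.
apply: (lt_le_trans _ (le_measure lebesgue_measure (mem_set (measurable_itv `]a, b])) (mem_set mD) sub)).
have := lebesgue_measure_itv `]a, b]; rewrite /= lte_fin ab => ->.
by rewrite -EFinD lte_fin subr_gt0.
Qed.

Lemma Rint_gt0 (R : realType) (D : set R) (f : R -> R) :
  measurable D -> (0 < lebesgue_measure D)%E ->
  lebesgue_measure.-integrable D (EFin \o f) ->
  (forall x, D x -> 0 < f x) -> 0 < Rintegral lebesgue_measure D f.
Proof.
move=> mD muD intf fpos.
have fin : (\int[lebesgue_measure]_(x in D) (EFin \o f) x \is a fin_num)%E by apply: integrable_fin_num.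
have ge0 : (0 <= \int[lebesgue_measure]_(x in D) (EFin \o f) x)%E.
  by apply: integral_ge0 => x Dx; rewrite lee_fin ltW// fpos.
rewrite /Rintegral; move: ge0; rewrite le_eqVlt => /predU1P[eq0|gt0].
  exfalso.
  have /integrableP[mf _] := intf.
  have : (\int[lebesgue_measure]_(x in D) `|(EFin \o f) x| = 0)%E.
    rewrite eq0; apply: eq_integral => x /set_mem Dx /=.
    by rewrite ger0_norm// ltW// fpos.
  move/(@ae_eq_integral_abs _ _ _ lebesgue_measure D mD (EFin \o f) mf) => [N [mN N0 sub]].
  have DN : D `<=` N.
    move=> x Dx; apply: sub => /= /(_ Dx) /= /eqP; rewrite eqe => /eqP fx0.
    by move: (fpos x Dx); rewrite fx0 ltxx.
  have := le_measure lebesgue_measure (mem_set mD) (mem_set mN) DN.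
  move=> le; have le0 : (lebesgue_measure D <= 0)%E.
    apply: (le_trans le); exact: (eq_ind_r (fun z => (z <= 0)%E) (lexx 0%E) N0).
  by have := lt_le_trans muD le0; rewrite ltxx.
by rewrite fine_gt0// gt0 /= ltey_eq fin.
Qed.

Lemma homo_le (R : realType) (f : R -> R) x y :
  {homo f : a b / a < b} -> x <= y -> f x <= f y.
Proof.
by move=> hf; rewrite le_eqVlt => /predU1P[->|h]; [exact: lexx|exact/ltW/hf].
Qed.

Lemma homo_rev (R : realType) (f : R -> R) x y :
  {homo f : a b / a < b} -> f x < f y -> x < y.
Proof.
move=> hf fxy; rewrite ltNge; apply/negP => /(@homo_le R f _ _ hf) h.
by move: (lt_le_trans fxy h); rewrite ltxx.
Qed.

Lemma mono (R : realType) (pi xq xu : R) (hq hu : R * R -> R) th t1 t2 :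
  model_assumptions pi xq xu hq hu -> - xu < t1 -> t1 < t2 -> t2 < xq ->
  s1 pi xq xu hq hu th t1 < s1 pi xq xu hq hu th t2 /\
  s2 pi xq xu hq hu th t2 < s2 pi xq xu hq hu th t1.
Proof.
move=> [[pi01 xq0 xu0] [[[mhq mhu] [hq0 hu0] _ [iq iu]] [cz _ lrg lr0 lrM]]] a b c.
have /andP[p0 p1] := pi01.
set S1 := Aset pi xq xu hq hu th t1.
set S2 := Aset pi xq xu hq hu th t2.
have mS1 : measurable S1 by exact: Aset_meas.
have mS2 : measurable S2 by exact: Aset_meas.
set k1 := thr pi xq xu t1.
set k2 := thr pi xq xu t2.
have k10 : 0 < k1 by apply: thr_pos => //; apply/andP; split => //; lra.
have k12 : k1 < k2 by exact: thr_mono.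
have S21 : S2 `<=` S1 by move=> x; rewrite /S1 /S2 /Aset /= -/k1 -/k2 => h; lra.
set Dd := S1 `\` S2.
have mDd : measurable Dd by exact: measurableD.
have eqS : S1 = S2 `|` Dd by rewrite /Dd setDUK.
have disj : [disjoint S2 & Dd].
  by apply/disj_setPS => x [h1 [_ h2]]; exact: h2 h1.
have intq D : measurable D -> lebesgue_measure.-integrable D (EFin \o (fun g => hq (th, g))).
  by move=> mD; apply: (integrableS measurableT mD (@subsetT _ D) (iq th)).
have intu D : measurable D -> lebesgue_measure.-integrable D (EFin \o (fun g => hu (th, g))).
  by move=> mD; apply: (integrableS measurableT mD (@subsetT _ D) (iu th)).
have intku k D : measurable D -> lebesgue_measure.-integrable D (EFin \o (fun g => k * hu (th, g))).
  move=> mD; apply: (eq_integrable mD _ _ _ (integrableZl mD k (intu D mD))) => x _ /=.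
  by rewrite EFinM.
have lrf := lrg th.
have hqE g : hq (th, g) = lr hq hu th g * hu (th, g).
  by rewrite /lr divfK// gt_eqF.
have [ga ga1] := lr0 th k1 k10.
have [gb gb2] := lrM th k2.
have gab : ga < gb by apply: (@homo_rev R _ _ _ lrf); lra.
have cont := @lr_cont R hq hu th cz.
have contw : {within `[ga, gb], continuous (fun g => lr hq hu th g)}.
  exact: continuous_subspaceT.
have [c1 _ c1E] : exists2 c, c \in `[ga, gb] & lr hq hu th c = k1.
  apply: IVT => //; first exact: ltW.
  by rewrite ge_min le_max; apply/andP; split; apply/orP; [left|right]; lra.
have [c2 _ c2E] : exists2 c, c \in `[ga, gb] & lr hq hu th c = k2.
  apply: IVT => //; first exact: ltW.
  by rewrite ge_min le_max; apply/andP; split; apply/orP; [left|right]; lra.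
have c12 : c1 < c2 by apply: (@homo_rev R _ _ _ lrf); lra.
have muD : (0 < lebesgue_measure Dd)%E.
  apply: (@meas_pos R Dd c1 c2 mDd c12) => x /=; rewrite in_itv /= => /andP[x1 x2].
  have h1 := lrf _ _ x1.
  have h2 := @homo_le R _ _ _ lrf x2.
  split; [rewrite /S1 /Aset /= -/k1; lra | rewrite /S2 /Aset /= -/k2 => h; lra].
have muS2 : (0 < lebesgue_measure S2)%E.
  have gb1 : gb < gb + 1 by lra.
  apply: (@meas_pos R S2 _ _ mS2 gb1) => x /=; rewrite in_itv /= => /andP[x1 x2].
  have h1 := lrf _ _ x1.
  rewrite /S2 /Aset /= -/k2; lra.
have QD : 0 < smass hq th Dd.
  by apply: (@Rint_gt0 R Dd _ mDd muD (intq _ mDd)) => x _; exact: hq0.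
have UD : 0 < smass hu th Dd.
  by apply: (@Rint_gt0 R Dd _ mDd muD (intu _ mDd)) => x _; exact: hu0.
have U2 : 0 < smass hu th S2.
  by apply: (@Rint_gt0 R S2 _ mS2 muS2 (intu _ mS2)) => x _; exact: hu0.
have addq : smass hq th S1 = smass hq th S2 + smass hq th Dd.
  rewrite /smass eqS Rintegral_setU //; apply: intq; exact: measurableU.
have addu : smass hu th S1 = smass hu th S2 + smass hu th Dd.
  rewrite /smass eqS Rintegral_setU //; apply: intu; exact: measurableU.
have Q2k : 0 < smass hq th S2 - k2 * smass hu th S2.
  have -> : smass hq th S2 - k2 * smass hu th S2 =
      Rintegral lebesgue_measure S2 (fun g => hq (th, g) - k2 * hu (th, g)).
    rewrite /smass RintegralB //; [|exact: intq|exact: intku].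
    by rewrite RintegralZl //; exact: intu.
  apply: (@Rint_gt0 R S2 _ mS2 muS2).
    apply: (@eq_integrable _ _ _ lebesgue_measure S2 mS2 _ _ _ (@integrableB _ _ _ lebesgue_measure S2 mS2 _ _ (intq S2 mS2) (intku k2 S2 mS2))) => x _ /=.
    by rewrite EFinB.
  move=> x; rewrite /S2 /Aset /= -/k2 hqE => h.
  rewrite -mulrBl; apply: mulr_gt0; [lra | exact: hu0].
have QDk : smass hq th Dd <= k2 * smass hu th Dd.
  rewrite /smass -RintegralZl //; last exact: intu.
  apply: le_Rintegral => //; [exact: intq | exact: intku |].
  move=> x [_]; rewrite /Aset /= -/k2 hqE => h.
  move: h; rewrite /S2 /Aset /= -/k2 => h.
  apply: ler_wpM2r; [exact/ltW/hu0 | lra].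
have Jpos : 0 < jmass pi hq hu th setT.
  have mT : (0 < lebesgue_measure (@setT R))%E.
    have z1 : (0:R) < 1 by [].
    by apply: (@meas_pos R setT 0 1 measurableT z1).
  have A1 : 0 < smass hq th setT.
    by apply: (@Rint_gt0 R setT _ measurableT mT (intq _ measurableT)) => x _; exact: hq0.
  have A2 : 0 <= smass hu th setT by apply: Rintegral_ge0 => x _; exact/ltW/hu0.
  rewrite /jmass.
  have A3 : 0 < pi * smass hq th setT by exact: mulr_gt0.
  have A4 : 0 <= (1 - pi) * smass hu th setT by apply: mulr_ge0 => //; lra.
  lra.
rewrite /s1 /s2; fold S1 S2; rewrite /jmass addq addu.
rewrite /jmass in Jpos.
move: Jpos Q2k QDk QD UD U2.
set J := _ + _ * smass hu th setT.
set Q2 := smass hq th S2; set QD' := smass hq th Dd.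
set U2' := smass hu th S2; set UD' := smass hu th Dd.
move=> Jpos Q2k QDk QDp UD U2.
have k20 : 0 < k2 by lra.
have Q2p : 0 < Q2 by have := mulr_gt0 k20 U2; lra.
have e : 0 < 1 - pi by lra.
split.
  have b0 : 0 < pi * (Q2 + QD') + (1 - pi) * (U2' + UD').
    have := mulr_gt0 p0 (addr_gt0 Q2p QDp); have := mulr_gt0 e (addr_gt0 U2 UD); lra.
  have d0 : 0 < pi * Q2 + (1 - pi) * U2'.
    have := mulr_gt0 p0 Q2p; have := mulr_gt0 e U2; lra.
  rewrite ltr_pdivlMr // mulrAC ltr_pdivrMr // -subr_gt0.
  have -> : pi * Q2 * (pi * (Q2 + QD') + (1 - pi) * (U2' + UD')) -
      pi * (Q2 + QD') * (pi * Q2 + (1 - pi) * U2') =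
      (pi * (1 - pi)) * ((Q2 - k2 * U2') * UD' + (k2 * UD' - QD') * U2') by ring.
  apply: mulr_gt0; first exact: mulr_gt0.
  have X := mulr_gt0 Q2k UD.
  have Y : 0 <= (k2 * UD' - QD') * U2' by apply: mulr_ge0; [lra | exact: ltW].
  lra.
rewrite ltr_pM2r ?invr_gt0 //.
have := mulr_gt0 p0 QDp; have := mulr_gt0 e UD; lra.
Qed.

Theorem mainTheorem11 (R : realType) (pi xq xu : R) (hq hu : R * R -> R)
  (c th tau_star tau1 tau2 : R) :
  model_assumptions pi xq xu hq hu ->
  - xu < c < xq ->
  phi pi hq hu th < (xu + c) / (xq + xu) ->
  - xu < tau_star < xq ->
  s1 pi xq xu hq hu th tau_star = s2 pi xq xu hq hu th tau_star ->
  - xu < tau1 < xq ->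
  s1 pi xq xu hq hu th tau1 = (xu + c) / (xq + xu) ->
  - xu < tau2 < xq ->
  s2 pi xq xu hq hu th tau2 = (xu + c) / (xq + xu) ->
  (tau1 < tau2 -> tau1 < tau_star < tau2) /\
  (tau2 < tau1 -> tau2 < tau_star < tau1).
Proof.
move=> MA _ _ hs hst ht1 e1 ht2 e2.
have M x y : x < y -> - xu < x < xq -> - xu < y < xq ->
    s1 pi xq xu hq hu th x < s1 pi xq xu hq hu th y /\
    s2 pi xq xu hq hu th y < s2 pi xq xu hq hu th x.
  move=> xy /andP[x1 x2] /andP[y1 y2]; exact: mono.
move: e1 e2 hst.
set b := (xu + c) / (xq + xu).
move=> e1 e2 hst.
split => lt12; apply/andP; split; rewrite ltNge; apply/negP;
  rewrite le_eqVlt => /predU1P[E|h].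
- rewrite E in hst; have [A B] := M _ _ lt12 ht1 ht2; lra.
- have [A B] := M _ _ lt12 ht1 ht2; have [C D] := M _ _ h hs ht1; lra.
- rewrite -E in hst; have [A B] := M _ _ lt12 ht1 ht2; lra.
- have [A B] := M _ _ lt12 ht1 ht2; have [C D] := M _ _ h ht2 hs; lra.
- rewrite E in hst; have [A B] := M _ _ lt12 ht2 ht1; lra.
- have [A B] := M _ _ lt12 ht2 ht1; have [C D] := M _ _ h hs ht2; lra.
- rewrite -E in hst; have [A B] := M _ _ lt12 ht2 ht1; lra.
- have [A B] := M _ _ lt12 ht2 ht1; have [C D] := M _ _ h ht1 hs; lra.
Qed.
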